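(* Let $A$ be a von Neumann algebra such that $\mathcal V(A)$ satisfies the descending chain condition: every chain $\cdots\subseteq C_3\subseteq C_2\subseteq C_1$ in $\mathcal V(A)$ stabilizes. Then the topological space $\Sigma^\ast$ is sober (every nonempty irreducible closed subset is the closure of a unique point). In particular, $\Sigma^\ast$ is sober whenever $A$ is finite-dimensional.
   Context: Let $A$ be a von Neumann algebra. $\mathcal{V}(A)$ denotes the set of abelian von Neumann subalgebras $C\subseteq A$ containing the unit of $A$, partially ordered by inclusion. For $C\in\mathcal V(A)$, $\Sigma_C$ denotes the Gelfand spectrum of $C$, with restriction maps $\lambda\mapsto\lambda|_D$ for $D\subseteq C$. Let $\Sigma=\{(C,\lambda)\mid C\in\mathcal V(A),\lambda\in\Sigma_C\}$ and $U_C=\{\lambda\mid(C,\lambda)\in U\}$ for $U\subseteq\Sigma$. The space $\Sigma^\ast$ is $\Sigma$ with the topology in which $U$ is open iff (1) each $U_C$ is open in $\Sigma_C$ and (2) $\lambda\in U_C$, $D\subseteq C$ imply $\lambda|_D\in U_D$. *)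

(* Defs.v *)
From mathcomp Require Import all_boot all_algebra complex.
From mathcomp Require Import boolp classical_sets reals.
Import GRing.Theory Num.Theory.
Local Open Scope ring_scope.
Local Open Scope classical_set_scope.

Set Implicit Arguments. Unset Strict Implicit. Unset Printing Implicit Defensive.

Section VNA.
Variable R : realType.
Local Notation C := R[i].
Variable V : lmodType C.
Variable ip : V -> V -> C.

Definition is_hilbert : Prop :=
  (forall (a : C) (x y z : V), ip (a *: x + y) z = a * ip x z + ip y z) /\
  (forall x y, ip y x = (ip x y)^*) /\
  (forall x, 0 <= ip x x) /\
  (forall x, ip x x = 0 -> x = 0) /\
  (forall u : nat -> V,
     (forall e : C, 0 < e -> exists N, forall m n, (N <= m)%N -> (N <= n)%N ->
          ip (u m - u n) (u m - u n) < e) ->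
     exists x, forall e : C, 0 < e -> exists N, forall n, (N <= n)%N ->
          ip (u n - x) (u n - x) < e).

Definition bounded_op (T : V -> V) : Prop :=
  (forall (a : C) (x y : V), T (a *: x + y) = a *: T x + T y) /\
  exists M : C, forall x, ip (T x) (T x) <= M * ip x x.

Definition commutant (S : set (V -> V)) : set (V -> V) :=
  [set T | bounded_op T /\ forall S0, S S0 -> T \o S0 = S0 \o T].

Definition is_adjoint (T S : V -> V) : Prop :=
  forall x y, ip (T x) y = ip x (S y).

Definition von_neumann_algebra (A : set (V -> V)) : Prop :=
  (forall T, A T -> bounded_op T) /\
  A id /\
  (forall (a : C) T S, A T -> A S -> A (fun x => a *: T x + S x)) /\
  (forall T S, A T -> A S -> A (T \o S)) /\
  (forall T, A T -> exists2 S, A S & is_adjoint T S) /\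
  commutant (commutant A) = A.

Definition VA (A : set (V -> V)) : set (set (V -> V)) :=
  [set Cc | von_neumann_algebra Cc /\ Cc `<=` A /\
            (forall T S, Cc T -> Cc S -> T \o S = S \o T)].

(* Gelfand spectrum of Cc: nonzero multiplicative linear functionals on Cc,
   represented as functions on all operators that vanish outside Cc. *)
Definition character (Cc : set (V -> V)) (l : (V -> V) -> C) : Prop :=
  (forall (a : C) T S, Cc T -> Cc S -> l (fun x => a *: T x + S x) = a * l T + l S) /\
  (forall T S, Cc T -> Cc S -> l (T \o S) = l T * l S) /\
  (exists T, Cc T /\ l T <> 0) /\
  (forall T, ~ Cc T -> l T = 0).

Definition gelfand_open (Cc : set (V -> V)) (U : set ((V -> V) -> C)) : Prop :=
  U `<=` character Cc /\
  forall l, U l -> exists (n : nat) (a : 'I_n -> (V -> V)) (e : C),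
    (forall i, Cc (a i)) /\ 0 < e /\
    forall m, character Cc m -> (forall i, `|m (a i) - l (a i)| < e) -> U m.

Definition restr (D : set (V -> V)) (l : (V -> V) -> C) : (V -> V) -> C :=
  fun T => if `[< D T >] then l T else 0.

Definition point := (set (V -> V) * ((V -> V) -> C))%type.

Definition Sigma (A : set (V -> V)) : set point :=
  [set p | VA A p.1 /\ character p.1 p.2].

Definition fiber (U : set point) (Cc : set (V -> V)) : set ((V -> V) -> C) :=
  [set l | U (Cc, l)].

Definition Sigma_open (A : set (V -> V)) (U : set point) : Prop :=
  U `<=` Sigma A /\
  (forall Cc, VA A Cc -> gelfand_open Cc (fiber U Cc)) /\
  (forall Cc l D, U (Cc, l) -> VA A D -> D `<=` Cc -> U (D, restr D l)).

Definition Sigma_closed (A : set (V -> V)) (F : set point) : Prop :=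
  F `<=` Sigma A /\ Sigma_open A (Sigma A `\` F).

Definition Sigma_closure (A : set (V -> V)) (S : set point) : set point :=
  [set p | Sigma A p /\ forall F, Sigma_closed A F -> S `<=` F -> F p].

Definition irreducible_closed (A : set (V -> V)) (F : set point) : Prop :=
  Sigma_closed A F /\ F !=set0 /\
  forall F1 F2, Sigma_closed A F1 -> Sigma_closed A F2 ->
    F `<=` F1 `|` F2 -> F `<=` F1 \/ F `<=` F2.

Definition Sigma_sober (A : set (V -> V)) : Prop :=
  forall F, irreducible_closed A F ->
    exists! p, Sigma A p /\ F = Sigma_closure A [set p].

Definition VA_dcc (A : set (V -> V)) : Prop :=
  forall c : nat -> set (V -> V), (forall n, VA A (c n)) ->
    (forall n, c n.+1 `<=` c n) -> exists N, forall n, (N <= n)%N -> c n = c N.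

Definition finite_dimensional (A : set (V -> V)) : Prop :=
  exists (n : nat) (b : 'I_n -> (V -> V)), (forall i, A (b i)) /\
    forall T, A T -> exists k : 'I_n -> C, T = (fun x => \sum_(i < n) k i *: b i x).

End VNA.

(* Main.v *)
Require Import Defs.
From mathcomp Require Import all_boot all_algebra complex.
From mathcomp Require Import boolp classical_sets reals.
From mathcomp Require Import order.
Import Order.TTheory GRing.Theory Num.Theory.

Set Implicit Arguments. Unset Strict Implicit. Unset Printing Implicit Defensive.

Section ProofSec.
Variable R : realType.
Local Notation C := R[i].
Variable V : lmodType C.
Variable ip : V -> V -> C.
Variable A : set (V -> V).
Local Open Scope ring_scope.
Local Open Scope classical_set_scope.

Lemma vna_id (D : set (V -> V)) : VA ip A D -> D id.
Proof. by case=> [[_ [? _]] _]. Qed.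

Lemma vna_lin (D : set (V -> V)) : VA ip A D ->
  forall (a : C) T S, D T -> D S -> D (fun x => a *: T x + S x).
Proof. by case=> [[_ [_ [? _]]] _]. Qed.

Lemma vna_comp (D : set (V -> V)) : VA ip A D ->
  forall T S, D T -> D S -> D (T \o S).
Proof. by case=> [[_ [_ [_ [? _]]]] _]. Qed.

Lemma vna_sub (D : set (V -> V)) : VA ip A D -> D `<=` A.
Proof. by case=> _ []. Qed.

Lemma char_id (D : set (V -> V)) l : VA ip A D -> character D l -> l id = 1.
Proof.
move=> VD [_ [Hm [[T [DT lT]] _]]].
have := Hm id T (vna_id VD) DT.
have -> : id \o T = T by [].
move=> e; apply: (mulIf (x := l T)); first by apply/eqP.
by rewrite mul1r -e.
Qed.

Lemma restr_in (D : set (V -> V)) (l : (V -> V) -> C) T : D T -> restr D l T = l T.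
Proof. by move=> DT; rewrite /restr asboolT. Qed.

Lemma restr_out (D : set (V -> V)) (l : (V -> V) -> C) T : ~ D T -> restr D l T = 0.
Proof. by move=> DT; rewrite /restr asboolF. Qed.

Lemma restr_char (Cc D : set (V -> V)) l : VA ip A Cc -> VA ip A D -> D `<=` Cc ->
  character Cc l -> character D (restr D l).
Proof.
move=> VC VD DC chl; have [Hl [Hm [Hn Hz]]] := chl.
split; [|split; [|split]].
- move=> a T S DT DS; rewrite restr_in; last exact: vna_lin.
  rewrite !restr_in //; apply: Hl; exact: DC.
- move=> T S DT DS; rewrite restr_in; last exact: vna_comp.
  rewrite !restr_in //; apply: Hm; exact: DC.
- exists id; split; first exact: vna_id.
  rewrite restr_in; last exact: vna_id.
  by rewrite (char_id VC chl); apply/eqP; rewrite oner_eq0.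
- move=> T nDT; exact: restr_out.
Qed.

Lemma restr_restr (C1 D : set (V -> V)) l : C1 `<=` D -> restr C1 (restr D l) = restr C1 l.
Proof.
move=> sub; apply: funext => T; case: (pselect (C1 T)) => h.
  by rewrite !restr_in //; exact: sub.
by rewrite !restr_out.
Qed.

Lemma restr_self (Cc : set (V -> V)) l : character Cc l -> restr Cc l = l.
Proof.
move=> [_ [_ [_ Hz]]]; apply: funext => T; case: (pselect (Cc T)) => h.
  by rewrite restr_in.
by rewrite restr_out // Hz.
Qed.

Definition Up (p : Defs.point V) : set (Defs.point V) :=
  [set q | Sigma ip A q /\ p.1 `<=` q.1 /\ restr p.1 q.2 = p.2].

Lemma open_Up_compl p : Sigma ip A p -> Sigma_open ip A (Sigma ip A `\` Up p).
Proof.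
case: p => C0 l0 [VC0 chl0] /=.
split; first by move=> q [].
split.
- move=> Cc VCc; split; first by move=> l [[_ ?] _].
  move=> l [[_ chl] nU].
  case: (pselect (C0 `<=` Cc)) => sub; last first.
    exists 0%N, (fun i => id), 1; split; first by case.
    split; first exact: ltr01.
    move=> m chm _; split; first by split.
    by case=> _ [].
  have [T nT] : exists T, restr C0 l T <> l0 T.
    apply/existsNP => H; apply: nU; split; first by split.
    split; first exact: sub.
    exact: funext.
  have C0T : C0 T.
    apply: contrapT => h; apply: nT; rewrite restr_out //.
    by case: chl0 => _ [_ [_ H]]; symmetry; exact: H.
  rewrite restr_in // in nT.
  exists 1%N, (fun _ => T), `|l T - l0 T|; split; first by move=> _; exact: sub.
  split; first by rewrite normr_gt0 subr_eq0; apply/eqP.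
  move=> m chm /(_ ord0) hm; split; first by split.
  case=> _ [_ /(congr1 (fun f => f T))]; rewrite /= restr_in // => mT.
  by move: hm; rewrite mT distrC ltxx.
- move=> Cc l D [[VCc chl] nU] VD DC; split.
    by split => //=; exact: (restr_char VCc VD DC chl).
  case=> /= _ [subD rr]; apply: nU; split; first by split.
  split; first exact: (subset_trans subD DC).
  by rewrite /= -(restr_restr l subD).
Qed.

Lemma Up_closed p : Sigma ip A p -> Sigma_closed ip A (Up p).
Proof. by move=> Sp; split; [move=> q [] | exact: open_Up_compl]. Qed.

Lemma closed_up (F : set (Defs.point V)) p q : Sigma_closed ip A F -> Sigma ip A p ->
  F p -> Up p q -> F q.
Proof.
case: p q => [C1 l1] [C2 l2] [FS [_ [_ down]]] [VC1 _] Fp [Sq [/= sub rr]].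
apply: contrapT => nFq.
have := down C2 l2 C1 (conj Sq nFq) VC1 sub.
by rewrite /= rr => -[].
Qed.

Lemma Up_self p : Sigma ip A p -> Up p p.
Proof.
case: p => C1 l1 [VC1 ch] /=; split => //; split => //=.
exact: restr_self.
Qed.

Lemma closure_Up p : Sigma ip A p -> Sigma_closure ip A [set p] = Up p.
Proof.
move=> Sp; apply/seteqP; split.
- move=> q [Sq H]; apply: H; first exact: Up_closed.
  by move=> _ ->; exact: Up_self.
- move=> q Uq; split; first by case: Uq.
  move=> F cF sF; apply: (closed_up cF Sp) Uq; exact: sF.
Qed.

Lemma Up_antisym p q : Up p q -> Up q p -> p = q.
Proof.
case: p q => [C1 l1] [C2 l2] [[_ ch2] [/= s12 r12]] [[_ ch1] [/= s21 r21]].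
have e : C1 = C2 by apply/seteqP; split.
subst C2; by rewrite -r12 restr_self.
Qed.

Definition Wset (C0 : set (V -> V)) (O : set ((V -> V) -> C)) : set (Defs.point V) :=
  [set q | Sigma ip A q /\ q.1 `<=` C0 /\ (q.1 = C0 -> O q.2)].

Lemma W_open C0 O : VA ip A C0 -> gelfand_open C0 O -> Sigma_open ip A (Wset C0 O).
Proof.
move=> VC0 [Ochar Oopen]; split; first by move=> q [].
split.
- move=> Cc VCc; split; first by move=> l [[]].
  move=> l [[_ chl] [sub h]].
  case: (pselect (Cc = C0)) => e.
  + subst Cc. have [n [a [e [Ha [He Hn]]]]] := Oopen l (h erefl).
    exists n, a, e; split => //; split => //.
    move=> m chm hm; split; first by split.
    by split => // _; exact: Hn.
  + exists 0%N, (fun _ => id), 1; split; first by case.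
    split; first exact: ltr01.
    move=> m chm _; split; first by split.
    by split => // /e.
- move=> Cc l D [[VCc chl] [sub h]] VD DC; split.
    by split => //=; exact: (restr_char VCc VD DC chl).
  split; first exact: (subset_trans DC sub).
  move=> /= eD; subst D.
  have eC : Cc = C0 by apply/seteqP; split.
  subst Cc; rewrite restr_self //; exact: h.
Qed.

Lemma gelfand_all (C0 : set (V -> V)) : gelfand_open C0 (character C0).
Proof.
split => // l _; exists 0%N, (fun _ => id), 1; split; first by case.
by split; [exact: ltr01 | move=> m ? _].
Qed.

Lemma openU U1 U2 : Sigma_open ip A U1 -> Sigma_open ip A U2 -> Sigma_open ip A (U1 `|` U2).
Proof.
move=> [S1 [g1 d1]] [S2 [g2 d2]]; split.
  by move=> q [h|h]; [exact: S1 | exact: S2].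
split.
- move=> Cc VCc; split.
    move=> l [h|h]; [exact: (g1 Cc VCc).1 | exact: (g2 Cc VCc).1].
  move=> l [h|h].
  + have [n [a [e [? [? Hn]]]]] := (g1 Cc VCc).2 l h.
    exists n, a, e; split => //; split => // m cm hm; left; exact: Hn.
  + have [n [a [e [? [? Hn]]]]] := (g2 Cc VCc).2 l h.
    exists n, a, e; split => //; split => // m cm hm; right; exact: Hn.
- move=> Cc l D [h|h] VD DC; [left; exact: d1 h VD DC | right; exact: d2 h VD DC].
Qed.

Lemma closedI F1 F2 : Sigma_closed ip A F1 -> Sigma_closed ip A F2 ->
  Sigma_closed ip A (F1 `&` F2).
Proof.
move=> [s1 o1] [s2 o2]; split; first by move=> q [/s1].
have -> : Sigma ip A `\` (F1 `&` F2) = (Sigma ip A `\` F1) `|` (Sigma ip A `\` F2).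
  apply/seteqP; split => q.
    move=> [Sq nI]; case: (pselect (F1 q)) => h1.
      by right; split => // h2; apply: nI.
    by left.
  by move=> [[Sq n1]|[Sq n2]]; split => // -[].
exact: openU.
Qed.

Lemma closed_compl W : Sigma_open ip A W -> Sigma_closed ip A (Sigma ip A `\` W).
Proof.
move=> oW; split; first by move=> q [].
have -> : Sigma ip A `\` (Sigma ip A `\` W) = W; last by [].
apply/seteqP; split => q.
  by move=> [Sq nn]; apply: contrapT => h; apply: nn.
move=> Wq; split; first exact: oW.1.
by case.
Qed.

Definition VA_wf := forall S : set (set (V -> V)), S `<=` VA ip A -> S !=set0 ->
  exists C0, S C0 /\ forall D, S D -> D `<=` C0 -> D = C0.

Lemma sober_of_wf : VA_wf -> Sigma_sober ip A.
Proof.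
move=> wf F [cF [[p Fp] irr]].
have FS := cF.1.
pose S := [set Cc | VA ip A Cc /\ exists l, F (Cc, l)].
have [C0 [[VC0 [l0 F0]] min]] : exists C0, S C0 /\ forall D, S D -> D `<=` C0 -> D = C0.
  apply: wf; first by move=> Cc [].
  exists p.1; split; first exact: (FS p Fp).1.
  by exists p.2; case: p Fp.
have minF : forall q, F q -> q.1 `<=` C0 -> q.1 = C0.
  move=> [D l] Fq sub; apply: min => //; split; [exact: (FS _ Fq).1 | by exists l].
have ch0 : character C0 l0 := (FS _ F0).2.
have uniq0 : forall l, F (C0, l) -> l = l0.
  move=> l Fl; apply: contrapT => nl.
  have [T nT] : exists T, l T <> l0 T.
    by apply/existsNP => H; apply: nl; exact: funext.
  have chl : character C0 l := (FS _ Fl).2.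
  have C0T : C0 T.
    apply: contrapT => h; apply: nT.
    by rewrite chl.2.2.2 // ch0.2.2.2.
  set d := `|l T - l0 T|.
  have d0 : 0 < d by rewrite normr_gt0 subr_eq0; apply/eqP.
  have d20 : 0 < d / 2 by rewrite divr_gt0 // ltr0n.
  pose O (l' : (V -> V) -> C) := [set m | character C0 m /\ `|m T - l' T| < d / 2].
  have Oop : forall l', gelfand_open C0 (O l').
    move=> l'; split; first by move=> m [].
    move=> m [chm hm]; exists 1%N, (fun _ => T), (d / 2 - `|m T - l' T|).
    split => //; split; first by rewrite subr_gt0.
    move=> m' chm' /(_ ord0) h; split => //.
    apply: le_lt_trans (ler_distD (m T) _ _) _.
    by rewrite -[d / 2](subrK `|m T - l' T|) ltrD2r.
  have disj : forall m, O l0 m -> O l m -> False.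
    move=> m [_ h1] [_ h2].
    have : `|l T - l0 T| < d / 2 + d / 2.
      apply: le_lt_trans (ler_distD (m T) _ _) _.
      by rewrite distrC ltrD.
    by rewrite -splitr ltxx.
  have Oself : forall l', character C0 l' -> O l' l'.
    by move=> l' ch; split => //; rewrite subrr normr0.
  have c1 := closedI cF (closed_compl (W_open VC0 (Oop l0))).
  have c2 := closedI cF (closed_compl (W_open VC0 (Oop l))).
  have cov : F `<=` (F `&` (Sigma ip A `\` Wset C0 (O l0))) `|` (F `&` (Sigma ip A `\` Wset C0 (O l))).
    move=> q Fq.
    case: (pselect (Wset C0 (O l0) q)) => w1; last by left; split => //; split; [exact: FS|].
    case: (pselect (Wset C0 (O l) q)) => w2; last by right; split => //; split; [exact: FS|].
    exfalso; case: w1 => _ [sub h1]; case: w2 => _ [_ h2].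
    have e := minF q Fq sub.
    exact: (disj _ (h1 e) (h2 e)).
  have [H|H] := irr _ _ c1 c2 cov.
  + case: (H _ F0) => _ [_ nW]; apply: nW; split; first exact: FS.
    by split => // _; exact: Oself.
  + case: (H _ Fl) => _ [_ nW]; apply: nW; split; first exact: FS.
    by split => // _; exact: Oself.
have FUp : F = Up (C0, l0).
  apply/seteqP; split; last by move=> q; apply: (closed_up cF (FS _ F0) F0).
  have c2 := closedI cF (closed_compl (W_open VC0 (gelfand_all C0))).
  have cov : F `<=` Up (C0, l0) `|` (F `&` (Sigma ip A `\` Wset C0 (character C0))).
    move=> q Fq.
    case: (pselect (Wset C0 (character C0) q)) => w; last first.
      by right; split => //; split; [exact: FS|].
    left; case: w => Sq [sub _]; have e := minF q Fq sub.
    case: q Fq Sq sub e => D l Fq Sq sub /= e; subst D.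
    rewrite (uniq0 l Fq); exact: Up_self.
  have [H|H] := irr _ _ (Up_closed (FS _ F0)) c2 cov.
  - exact: H.
  - case: (H _ F0) => _ [_ nW]; exfalso; apply: nW; split; first exact: FS.
    by split => // _; exact: ch0.
exists (C0, l0); split.
  by split; [exact: FS | rewrite closure_Up //; exact: FS].
move=> q [Sq Fq]; rewrite closure_Up // in Fq.
apply: Up_antisym.
- by rewrite -FUp Fq; exact: Up_self.
- by rewrite -Fq.
Qed.

Lemma wf_dcc : VA_dcc ip A -> VA_wf.
Proof.
move=> dcc S SV [C1 SC1]; apply: contrapT => nmin.
have step : forall Cc, exists D, S Cc -> S D /\ D `<=` Cc /\ D <> Cc.
  move=> Cc; case: (pselect (S Cc)) => h; last by exists Cc.
  apply: contrapT => H; apply: nmin; exists Cc; split => // D SD sub.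
  apply: contrapT => ne; apply: H; exists D => _; split => //.
have [f hf] := choice step.
pose c n := iter n f C1.
have Sc : forall n, S (c n).
  by elim => [|n IH] //=; exact: (hf _ IH).1.
have [N HN] := dcc c (fun n => SV _ (Sc n)) (fun n => (hf _ (Sc n)).2.1).
have := HN N.+1 (leqnSn N).
exact: (hf _ (Sc N)).2.2.
Qed.

Lemma vna_zero (D : set (V -> V)) : VA ip A D -> D (fun _ => 0).
Proof.
move=> VD; have := vna_lin VD (-1) (vna_id VD) (vna_id VD).
have -> : (fun x => (-1) *: id x + id x) = (fun _ : V => 0 : V).
  by apply: funext => x; rewrite scaleN1r addNr.
by [].
Qed.

Lemma vna_sum (D : set (V -> V)) (f : nat -> V -> V) : VA ip A D ->
  forall k (b : 'I_k -> C), (forall i : 'I_k, D (f i)) ->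
  D (fun x => \sum_(i < k) b i *: f i x).
Proof.
move=> VD; elim => [|k IH] b Hf.
  have -> : (fun x => \sum_(i < 0) b i *: f i x) = (fun _ => 0).
    by apply: funext => x; rewrite big_ord0.
  exact: vna_zero.
have -> : (fun x => \sum_(i < k.+1) b i *: f i x) =
   (fun x => b ord_max *: f k x + \sum_(i < k) b (widen_ord (leqnSn k) i) *: f i x).
  by apply: funext => x; rewrite big_ord_recr /= addrC.
apply: vna_lin => //; first exact: (Hf ord_max).
exact: IH (fun i => b (widen_ord (leqnSn k) i)) (fun i => Hf (widen_ord (leqnSn k) i)).
Qed.

Definition indep (D : set (V -> V)) k (f : nat -> V -> V) :=
  (forall i : 'I_k, D (f i)) /\
  forall b : 'I_k -> C, (fun x => \sum_(i < k) b i *: f i x) = (fun _ => 0) ->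
    forall i, b i = 0.

Lemma indep0 D f : indep D 0 f.
Proof. by split; [case | move=> b _; case]. Qed.

Lemma indep_ext (D Cc : set (V -> V)) k f x : VA ip A D -> indep D k f ->
  D `<=` Cc -> Cc x -> ~ D x -> indep Cc k.+1 (fun i => if i == k then x else f i).
Proof.
move=> VD [fD find] DC Cx nDx; split.
  move=> i /=; case: ifP => [_|ne] //.
  have h : (i < k)%N by rewrite ltn_neqAle ne -ltnS ltn_ord.
  exact: (DC _ (fD (Ordinal h))).
move=> b hb.
have E : forall y, b ord_max *: x y + \sum_(i < k) b (widen_ord (leqnSn k) i) *: f i y = 0.
  move=> y; have := congr1 (fun h => h y) hb => /=.
  rewrite big_ord_recr /= eqxx addrC.
  under eq_bigr => i _ do rewrite (ltn_eqF (ltn_ord i)).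
  by [].
have bk : b ord_max = 0.
  apply: contrapT => /eqP nz; apply: nDx.
  have -> : x = (fun y => \sum_(i < k) (- (b ord_max)^-1 * b (widen_ord (leqnSn k) i)) *: f i y).
    apply: funext => y; have := E y; move/eqP; rewrite addr_eq0 => /eqP h.
    under eq_bigr => i _ do rewrite -scalerA.
    rewrite -scaler_sumr scaleNr -scalerN -h scalerA mulVf // scale1r //.
  exact: vna_sum VD _ _ fD.
have rest : forall i : 'I_k, b (widen_ord (leqnSn k) i) = 0.
  apply: find; apply: funext => y; have := E y.
  by rewrite bk scale0r add0r.
move=> i; case: (ltnP i k) => h.
  have -> : i = widen_ord (leqnSn k) (Ordinal h) by apply: val_inj.
  exact: rest.
have -> : i = ord_max.
  by apply: val_inj => /=; apply/eqP; rewrite eqn_leq h -ltnS ltn_ord.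
exact: bk.
Qed.

Lemma dim_bound : finite_dimensional A -> exists n, forall D k f,
  D `<=` A -> indep D k f -> (k <= n)%N.
Proof.
move=> [n [bs [bA span]]]; exists n => D k f DA [fD find].
have [g hg] : {g : (V -> V) -> 'I_n -> C & forall T, A T ->
    T = (fun x => \sum_(i < n) g T i *: bs i x)}.
  apply: (choice (P := fun T g => A T -> T = (fun x => \sum_(i < n) g i *: bs i x))).
  move=> T; case: (pselect (A T)) => h; last by exists (fun _ => 0).
  by have [kk hk] := span T h; exists kk.
pose K : 'M[C]_(k, n) := \matrix_(i, l) g (f i) l.
rewrite leqNgt; apply/negP => kn.
have nrf : ~~ row_free K.
  apply/negP => /eqP e; move: (rank_leq_col K); rewrite e.
  by rewrite leqNgt kn.
rewrite -kermx_eq0 in nrf.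
have [i ri] : exists i, row i (kermx K) != 0.
  apply: contrapT => H; move/negP: nrf; apply.
  apply/eqP/row_matrixP => i; rewrite row0.
  apply: contrapT => ne; apply: H; exists i; exact/eqP.
set v := row i (kermx K) in ri.
have vK : v *m K = 0 by rewrite /v -row_mul mulmx_ker row0.
have Ef : forall x (j : 'I_k), f j x = \sum_(l < n) K j l *: bs l x.
  move=> x j; have := congr1 (fun h => h x) (hg _ (DA _ (fD j))) => /= ->.
  by apply: eq_bigr => l _; rewrite mxE.
have := find (fun j => v 0 j).
have H0 : (fun x => \sum_(j < k) v 0 j *: f j x) = (fun _ => 0).
  apply: funext => x.
  under eq_bigr => j _ do rewrite Ef scaler_sumr.
  rewrite exchange_big /=; apply: big1 => l _.
  under eq_bigr => j _ do rewrite scalerA.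
  rewrite -scaler_suml.
  have : (v *m K) 0 l = 0 by rewrite vK mxE.
  by rewrite mxE => ->; rewrite scale0r.
move=> /(_ H0) hv; move/eqP: ri; apply.
by apply/rowP => j; rewrite hv mxE.
Qed.

Definition Rk (Cc : set (V -> V)) k :=
  (exists f, indep Cc k f) /\ forall j f, indep Cc j f -> (j <= k)%N.

Lemma Rk_exists n (Cc : set (V -> V)) :
  (forall D k f, D `<=` A -> indep D k f -> (k <= n)%N) ->
  Cc `<=` A -> exists k, Rk Cc k.
Proof.
move=> bound CA; apply: contrapT => nR.
have : forall m, exists j, (m <= j)%N /\ exists f, indep Cc j f.
  elim => [|m [j [mj [f fj]]]].
    by exists 0%N; split => //; exists (fun _ _ => 0); exact: indep0.
  have nR' : ~ Rk Cc j by move=> h; apply: nR; exists j.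
  apply: contrapT => H; apply: nR'; split; first by exists f.
  move=> j' f' hf'; apply: contrapT => /negP; rewrite -ltnNge => lt.
  by apply: H; exists j'; split; [exact: leq_ltn_trans mj lt | exists f'].
move=> /(_ n.+1) [j [nj [f fj]]].
have jn := bound _ _ _ CA fj.
by move: (leq_trans nj jn); rewrite ltnn.
Qed.

Lemma Rk_strict (D Cc : set (V -> V)) k k' : VA ip A D -> D `<=` Cc -> D <> Cc ->
  Rk D k' -> Rk Cc k -> (k' < k)%N.
Proof.
move=> VD DC ne [[f fi] _] [_ bd].
have [x [Cx nDx]] : exists x, Cc x /\ ~ D x.
  apply: contrapT => H; apply: ne; apply/seteqP; split => // y Cy.
  by apply: contrapT => nDy; apply: H; exists y.
exact: bd _ _ (indep_ext VD fi DC Cx nDx).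
Qed.

Lemma wf_fd : finite_dimensional A -> VA_wf.
Proof.
move=> fd; have [n bound] := dim_bound fd.
move=> S SV [C1 SC1].
have [k Rk1] := Rk_exists bound (vna_sub (SV _ SC1)).
elim/ltn_ind: k C1 SC1 Rk1 => k IH C1 SC1 Rk1.
case: (pselect (forall D, S D -> D `<=` C1 -> D = C1)) => h; first by exists C1.
have [D [SD [sub ne]]] : exists D, S D /\ D `<=` C1 /\ D <> C1.
  apply: contrapT => H; apply: h => D SD sub; apply: contrapT => ne.
  by apply: H; exists D.
have [k' Rk'] := Rk_exists bound (vna_sub (SV _ SD)).
exact: IH k' (Rk_strict (SV _ SD) sub ne Rk' Rk1) D SD Rk'.
Qed.

End ProofSec.

Theorem proposition2p27 (R : realType) (V : lmodType R[i]) (ip : V -> V -> R[i])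
  (A : set (V -> V)) :
  is_hilbert ip -> von_neumann_algebra ip A ->
  (VA_dcc ip A -> Sigma_sober ip A) /\
  (finite_dimensional A -> Sigma_sober ip A).
Proof.
move=> _ _; split => [dcc|fd]; apply: sober_of_wf; [exact: wf_dcc | exact: wf_fd].
Qed.
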